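(* Let $(G,M,\Delta)$ be a Garside structure, $(H,N,\delta)$ a parabolic substructure, $T$ the set of $(H,N)$-reduced elements of $G$, and $\mathcal S=\mathrm{Div}(\Delta)\setminus\{1\}$. Let $\alpha\in G$, $\beta\in\pi_H(\alpha)$ and $u\in\mathcal S$. Let $\theta\in T$ with $H\theta=H\alpha$, and assume $\theta\in M^{-1}\setminus\{1\}$. Then there exists $\beta'\in\pi_H(\alpha u)$ such that $d(\beta,\beta')\le3$.
   Context: Let $G$ be a group and $M$ a submonoid with $M\cap M^{-1}=\{1\}$. Define $\alpha\le_L\beta$ iff $\alpha^{-1}\beta\in M$, and $\alpha\le_R\beta$ iff $\beta\alpha^{-1}\in M$. For $a\in M$ let $\mathrm{Div}_L(a)=\{b\in M: b\le_L a\}$, $\mathrm{Div}_R(a)=\{b\in M: b\le_R a\}$; $a$ is balanced if these coincide, and then $\mathrm{Div}(a)$ denotes this set. $M$ is Noetherian if each $a\in M$ admits an $n$ such that $a$ is not a product of more than $n$ non-trivial factors. A Garside structure $(G,M,\Delta)$: $\Delta\in M$ balanced, $M$ Noetherian, $\mathrm{Div}(\Delta)$ finite and generating $M$ as a monoid and $G$ as a group, $(G,\le_L)$ a lattice with meet $\wedge_L$. A parabolic substructure $(H,N,\delta)$: $\delta\in M$ balanced, $H$ (resp. $N$) the subgroup (resp. submonoid) generated by $\mathrm{Div}(\delta)$, and $\mathrm{Div}(\delta)=\mathrm{Div}(\Delta)\cap N$; it is assumed $H\ne\{1\}$. Put $\omega=\delta^{-1}\Delta$. $a\in M$ is unmovable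 if $\Delta\not\le_L a$; every $\alpha\in G$ has a unique right $\Delta$-form $\alpha=a\Delta^p$ ($a\in M$ unmovable, $p\in\mathbb Z$). $a\in M$ is $N$-reduced if $a\wedge_L\delta=1$. $\alpha$ with right $\Delta$-form $a\Delta^p$ is $(H,N)$-reduced if $a$ is $N$-reduced and either $p=0$, or $p<0$ and $\omega\not\le_L a$. With $\lg$ the word length w.r.t. $\mathcal S$: $d(\alpha,\beta)=\lg(\alpha^{-1}\beta)$, $d(\alpha,H)=\min_{\beta\in H}d(\alpha,\beta)$, $\pi_H(\alpha)=\{\beta\in H:d(\alpha,\beta)=d(\alpha,H)\}$. *)

(* Defs.v *)
From mathcomp Require Import all_boot.
From mathcomp Require Import ssrint.

Set Implicit Arguments.
Unset Strict Implicit.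
Unset Printing Implicit Defensive.

Local Open Scope group_scope.

Section Garside.
Variable G : groupType.

Definition zpow (x : G) (p : int) : G :=
  match p with
  | Posz n => x ^+ n
  | Negz n => (x ^+ n.+1)^-1
  end.

Inductive mgen (S : G -> Prop) : G -> Prop :=
  | mgen1 : mgen S 1
  | mgenM x y : S x -> mgen S y -> mgen S (x * y).

Inductive ggen (S : G -> Prop) : G -> Prop :=
  | ggen1 : ggen S 1
  | ggenM x y : S x -> ggen S y -> ggen S (x * y)
  | ggenV x y : S x -> ggen S y -> ggen S (x^-1 * y).

Definition pos_cone (M : G -> Prop) : Prop :=
  [/\ M 1, (forall x y, M x -> M y -> M (x * y))
    & (forall x, M x -> M (x^-1) -> x = 1)].

Definition leL (M : G -> Prop) (a b : G) : Prop := M (a^-1 * b).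
Definition leR (M : G -> Prop) (a b : G) : Prop := M (b * a^-1).

Definition DivL (M : G -> Prop) (a : G) : G -> Prop := fun b => M b /\ leL M b a.
Definition DivR (M : G -> Prop) (a : G) : G -> Prop := fun b => M b /\ leR M b a.

Definition balanced (M : G -> Prop) (a : G) : Prop :=
  M a /\ (forall b, DivL M a b <-> DivR M a b).

(* Div(a) for a balanced element *)
Definition Div (M : G -> Prop) (a : G) : G -> Prop := DivL M a.

Definition prodl (s : seq G) : G := foldr (fun x y => x * y) 1 s.

Definition noetherian (M : G -> Prop) : Prop :=
  forall a, M a -> exists n : nat, forall s : seq G,
      (forall x, x \in s -> M x /\ x <> 1) -> prodl s = a -> size s <= n.

Definition is_meetL (M : G -> Prop) (a b c : G) : Prop :=
  [/\ leL M c a, leL M c b & forall d, leL M d a -> leL M d b -> leL M d c].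
Definition is_joinL (M : G -> Prop) (a b c : G) : Prop :=
  [/\ leL M a c, leL M b c & forall d, leL M a d -> leL M b d -> leL M c d].

Definition lattice_L (M : G -> Prop) : Prop :=
  forall a b, (exists c, is_meetL M a b c) /\ (exists c, is_joinL M a b c).

Definition finite_set (S : G -> Prop) : Prop :=
  exists s : seq G, forall x, S x <-> x \in s.

Definition garside (M : G -> Prop) (Delta : G) : Prop :=
  pos_cone M /\ balanced M Delta /\ noetherian M /\
  finite_set (Div M Delta) /\
  (forall a, M a <-> mgen (Div M Delta) a) /\
  (forall g, ggen (Div M Delta) g) /\
  lattice_L M.

Definition Hsub (M : G -> Prop) (delta : G) : G -> Prop := ggen (Div M delta).
Definition Nsub (M : G -> Prop) (delta : G) : G -> Prop := mgen (Div M delta).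

Definition parabolic (M : G -> Prop) (Delta delta : G) : Prop :=
  [/\ M delta, balanced M delta,
      (forall b, Div M delta b <-> (Div M Delta b /\ Nsub M delta b))
    & exists h, Hsub M delta h /\ h <> 1].

Definition unmovable (M : G -> Prop) (Delta a : G) : Prop :=
  M a /\ ~ leL M Delta a.

Definition int_neg (p : int) : Prop :=
  match p with Negz _ => True | Posz _ => False end.

Definition right_Dform (M : G -> Prop) (Delta alpha a : G) (p : int) : Prop :=
  unmovable M Delta a /\ alpha = a * zpow Delta p.

Definition N_reduced (M : G -> Prop) (delta a : G) : Prop :=
  M a /\ is_meetL M a delta 1.

Definition HN_reduced (M : G -> Prop) (Delta delta alpha : G) : Prop :=
  exists (a : G) (p : int), right_Dform M Delta alpha a p /\
    N_reduced M delta a /\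
    (p = 0%Z \/ (int_neg p /\ ~ leL M (delta^-1 * Delta) a)).

(* words over S ∪ S^{-1}; (true, x) stands for x^{-1} *)
Definition eval_word (w : seq (bool * G)) : G :=
  prodl [seq (if e.1 then e.2^-1 else e.2) | e <- w].

Definition is_word (S : G -> Prop) (w : seq (bool * G)) (g : G) : Prop :=
  (forall e, e \in w -> S e.2) /\ eval_word w = g.

Definition word_length (S : G -> Prop) (g : G) (n : nat) : Prop :=
  (exists w, is_word S w g /\ size w = n) /\
  (forall w, is_word S w g -> n <= size w).

Definition dist (S : G -> Prop) (alpha beta : G) (n : nat) : Prop :=
  word_length S (alpha^-1 * beta) n.

Definition proj (S H : G -> Prop) (alpha beta : G) : Prop :=
  H beta /\ exists n, dist S alpha beta n /\
    (forall beta' m, H beta' -> dist S alpha beta' m -> n <= m).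

Definition rcoset (H : G -> Prop) (x : G) : G -> Prop :=
  fun g => exists h, H h /\ g = h * x.

End Garside.

(* Main.v *)
Require Import Defs.
From mathcomp Require Import all_boot.
From mathcomp Require Import ssrint.
From Stdlib Require Import Classical.
From mathcomp Require Import zify.
Set Implicit Arguments.
Unset Strict Implicit.
Unset Printing Implicit Defensive.
Local Open Scope group_scope.

Ltac gn := (repeat progress rewrite ?invgM ?invgK ?invg1 ?mulgA ?mulgK ?mulgVK ?mulVg ?mulgV ?mul1g ?mulg1); try done.


Section Basic.
Variable G : groupType.
Variable M : G -> Prop.
Hypothesis hM : pos_cone M.

Lemma M1 : M 1. Proof. by case: hM. Qed.
Lemma MM x y : M x -> M y -> M (x * y). Proof. by case: hM => _ h _; apply: h. Qed.
Lemma Manti x : M x -> M x^-1 -> x = 1. Proof. by case: hM => _ _ h; apply: h. Qed.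

Lemma Meq x y : x = y -> M x -> M y. Proof. by move=> ->. Qed.

Lemma Mtr x y : M x -> x = y -> M y. Proof. by move=> h <-. Qed.
Lemma le_refl x : leL M x x. Proof. by rewrite /leL mulVg; apply: M1. Qed.
Lemma le_trans x y z : leL M x y -> leL M y z -> leL M x z.
Proof. rewrite /leL => h1 h2; apply: Meq (MM h1 h2); by gn. Qed.
Lemma le_anti x y : leL M x y -> leL M y x -> x = y.
Proof.
rewrite /leL => h1 h2.
have e : x^-1 * y = 1 by apply: Manti => //; apply: Meq h2; gn.
by move: (mulKg x^-1 y); rewrite invgK e mulg1.
Qed.
Lemma le_mul2l g x y : leL M (g * x) (g * y) <-> leL M x y.
Proof. by rewrite /leL invgM -mulgA (mulgA g^-1) mulVg mul1g. Qed.
Lemma le1M x : leL M 1 x <-> M x.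
Proof. by rewrite /leL invg1 mul1g. Qed.
Lemma le1I x : M x -> leL M 1 x. Proof. by move/le1M. Qed.
Lemma le1E x : leL M 1 x -> M x. Proof. by move/le1M. Qed.
Lemma leM1 x : leL M x 1 <-> M x^-1.
Proof. by rewrite /leL mulg1. Qed.
Lemma le_mulM x y : M y -> leL M x (x * y).
Proof. by rewrite /leL mulKg. Qed.

Lemma join_le a b c d : is_joinL M a b c -> leL M a d -> leL M b d -> leL M c d.
Proof. by case=> _ _ h; apply: h. Qed.
Lemma join_l a b c : is_joinL M a b c -> leL M a c. Proof. by case. Qed.
Lemma join_r a b c : is_joinL M a b c -> leL M b c. Proof. by case. Qed.
Lemma meet_ge a b c d : is_meetL M a b c -> leL M d a -> leL M d b -> leL M d c.
Proof. by case=> _ _ h; apply: h. Qed.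
Lemma meet_l a b c : is_meetL M a b c -> leL M c a. Proof. by case. Qed.
Lemma meet_r a b c : is_meetL M a b c -> leL M c b. Proof. by case. Qed.

Lemma le_lcancel g x y : leL M x (g * y) <-> leL M (g^-1 * x) y.
Proof. by rewrite /leL invgM invgK mulgA. Qed.
Lemma le_lcancel' g x y : leL M (g * x) y <-> leL M x (g^-1 * y).
Proof. by rewrite /leL invgM mulgA. Qed.
Lemma join_lmul g a b c : is_joinL M a b c -> is_joinL M (g * a) (g * b) (g * c).
Proof.
case=> h1 h2 h3; split; try by apply/le_mul2l.
move=> d hd1 hd2; apply: ((le_lcancel' g c d).2); apply: h3; [exact: ((le_lcancel' g a d).1 hd1) | exact: ((le_lcancel' g b d).1 hd2)].
Qed.
Lemma meet_lmul g a b c : is_meetL M a b c -> is_meetL M (g * a) (g * b) (g * c).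
Proof.
case=> h1 h2 h3; split; try by apply/le_mul2l.
move=> d hd1 hd2; apply: ((le_lcancel g d c).2); apply: h3; [exact: ((le_lcancel g d a).1 hd1) | exact: ((le_lcancel g d b).1 hd2)].
Qed.

Lemma prodl_cat (s1 s2 : seq G) : prodl (s1 ++ s2) = prodl s1 * prodl s2.
Proof. elim: s1 => [|x s IH] /=; first by rewrite mul1g. by rewrite IH mulgA. Qed.

End Basic.


Section Bal.
Variable G : groupType.
Variable M : G -> Prop.
Hypothesis hM : pos_cone M.

Lemma mgen_mul (S : G -> Prop) x y : mgen S x -> mgen S y -> mgen S (x * y).
Proof. elim=> [|a b Sa _ IH] my; first by rewrite mul1g. rewrite -mulgA; exact: (mgenM Sa (IH my)). Qed.
Lemma mgen_sub (S : G -> Prop) x : S x -> mgen S x.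
Proof. by move=> Sx; rewrite -(mulg1 x); apply: mgenM => //; apply: mgen1. Qed.
Lemma mgen_conj (S : G -> Prop) c : (forall s, S s -> S (c^-1 * s * c)) ->
  forall x, mgen S x -> mgen S (c^-1 * x * c).
Proof.
move=> hS x; elim=> [|a b Sa _ IH]; first by rewrite mulg1 mulVg; exact: mgen1.
have -> : c^-1 * (a * b) * c = (c^-1 * a * c) * (c^-1 * b * c) by gn.
exact: mgenM (hS _ Sa) IH.
Qed.
Lemma conj_iter (P : G -> Prop) c : (forall x, P x -> P (c^-1 * x * c)) ->
  forall k x, P x -> P ((c ^+ k)^-1 * x * c ^+ k).
Proof.
move=> hP; elim=> [|k IH] x Px; first by rewrite expg0 invg1 mul1g mulg1.
have -> : (c ^+ k.+1)^-1 * x * c ^+ k.+1 = c^-1 * ((c ^+ k)^-1 * x * c ^+ k) * c.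
  by rewrite expgSr; gn.
exact/hP/IH.
Qed.
Lemma conj_iter' (P : G -> Prop) c : (forall x, P x -> P (c * x * c^-1)) ->
  forall k x, P x -> P (c ^+ k * x * (c ^+ k)^-1).
Proof.
move=> hP; elim=> [|k IH] x Px; first by rewrite expg0 invg1 mul1g mulg1.
have -> : c ^+ k.+1 * x * (c ^+ k.+1)^-1 = c * (c ^+ k * x * (c ^+ k)^-1) * c^-1.
  by rewrite expgS; gn.
exact/hP/IH.
Qed.

Variable b : G.
Hypothesis hb : balanced M b.

Lemma bal_R s : Div M b s -> M (b * s^-1).
Proof. by case: hb => _ h /h []. Qed.
Lemma bal_L s : M s -> M (b * s^-1) -> Div M b s.
Proof. by case: hb => _ h Ms Mr; apply/h. Qed.
Lemma bal_conjV s : Div M b s -> M (b^-1 * s * b).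
Proof.
move=> [Ms Mt]; rewrite /leL in Mt.
have : Div M b (s^-1 * b) by apply: bal_L => //; apply: Meq Ms; gn.
by case=> _; rewrite /leL; apply: Meq; gn.
Qed.
Lemma bal_conj s : Div M b s -> M (b * s * b^-1).
Proof.
move=> hs; have Mt := bal_R hs.
have : Div M b (b * s^-1) by split => //; rewrite /leL; apply: Meq hs.1; gn.
by move/bal_R; apply: Meq; gn.
Qed.
Lemma Div_compl s : Div M b s -> Div M b (s^-1 * b).
Proof.
move=> hs; split; first exact: hs.2.
rewrite /leL; apply: Meq (bal_conjV hs); gn.
Qed.
Lemma Div_complR s : Div M b s -> Div M b (b * s^-1).
Proof.
move=> hs; split; first exact: bal_R.
rewrite /leL; apply: Meq hs.1; gn.
Qed.
Lemma Div_conjV s : Div M b s -> Div M b (b^-1 * s * b).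
Proof.
move=> hs; split; first exact: bal_conjV.
rewrite /leL; apply: Meq (bal_conjV (Div_compl hs)); gn.
Qed.
Lemma Div_conj s : Div M b s -> Div M b (b * s * b^-1).
Proof.
move=> hs; split; first exact: bal_conj.
rewrite /leL; apply: Meq (bal_R hs); gn.
Qed.
Lemma Div_M s : Div M b s -> M s. Proof. by case. Qed.
Lemma Div_self : Div M b b.
Proof. by split; [case: hb | rewrite /leL mulVg; exact: M1]. Qed.

End Bal.

Section Gar.
Variable G : groupType.
Variable M : G -> Prop.
Variable D : G.
Hypothesis hM : pos_cone M.
Hypothesis hbal : balanced M D.
Hypothesis hgen : forall a, M a <-> mgen (Div M D) a.
Hypothesis hlat : lattice_L M.

Lemma MD : M D. Proof. by case: hbal. Qed.
Lemma MconjV x : M x -> M (D^-1 * x * D).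
Proof. move/hgen=> h; apply/hgen; apply: mgen_conj h => s; exact: Div_conjV. Qed.
Lemma Mconj x : M x -> M (D * x * D^-1).
Proof.
move/hgen=> h; apply/hgen.
have hS : forall s, Div M D s -> Div M D (D^-1^-1 * s * D^-1).
  by move=> s hs; rewrite invgK; exact: Div_conj.
by have := mgen_conj hS h; rewrite invgK.
Qed.
Lemma MconjVk k x : M x -> M ((D ^+ k)^-1 * x * D ^+ k).
Proof. move=> h; exact: (conj_iter MconjV). Qed.
Lemma Mconjk k x : M x -> M (D ^+ k * x * (D ^+ k)^-1).
Proof. move=> h; exact: (conj_iter' Mconj). Qed.
Lemma MDk k : M (D ^+ k).
Proof. elim: k => [|k IH]; first exact: (M1 hM). rewrite expgS; exact: (MM hM MD IH). Qed.

Lemma le_rmul k x y : leL M x y -> leL M (x * D ^+ k) (y * D ^+ k).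
Proof. rewrite /leL => h; apply: Meq (MconjVk k h); gn. Qed.
Lemma le_rmulV k x y : leL M x y -> leL M (x * (D ^+ k)^-1) (y * (D ^+ k)^-1).
Proof. rewrite /leL => h; apply: Meq (Mconjk k h); gn. Qed.
Lemma le_rmul_iff k x y : leL M (x * D ^+ k) (y * D ^+ k) <-> leL M x y.
Proof.
split; last exact: le_rmul.
by move/(le_rmulV k); rewrite !mulgK.
Qed.
Lemma meet_rmul k a b c : is_meetL M a b c -> is_meetL M (a * D ^+ k) (b * D ^+ k) (c * D ^+ k).
Proof.
case=> h1 h2 h3; split; try exact: le_rmul.
move=> d hd1 hd2.
have: leL M (d * (D ^+ k)^-1) c.
  apply: h3; rewrite -(le_rmul_iff k) mulgVK //.
by rewrite -(le_rmul_iff k) mulgVK.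
Qed.

Definition BD (g : G) (n : nat) := exists j k, (j + k <= n)%N /\ M (D ^+ j * g) /\ M (g^-1 * D ^+ k).

Lemma BD_mono g n m : BD g n -> (n <= m)%N -> BD g m.
Proof. case=> j [k [h1 h2]] h; exists j, k; split=> //; exact: leq_trans h1 h. Qed.

Lemma BD_mul g1 g2 n1 n2 : BD g1 n1 -> BD g2 n2 -> BD (g1 * g2) (n1 + n2).
Proof.
case=> j1 [k1 [hn1 [a1 b1]]] [j2 [k2 [hn2 [a2 b2]]]].
exists (j1 + j2)%N, (k1 + k2)%N; split; first by rewrite addnACA leq_add.
split.
  apply: Meq (MM hM (Mconjk j2 a1) a2); rewrite (addnC j1 j2) expgnDr; gn.
apply: Meq (MM hM b2 (MconjVk k2 b1)); rewrite expgnDr; gn.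
Qed.

Lemma BD_letter s : Div M D s -> BD s 1 /\ BD s^-1 1.
Proof.
move=> hs; split.
  exists 0%N, 1%N; split=> //; split; first by rewrite expg0 mul1g; exact: hs.1.
  by rewrite expg1; exact: hs.2.
exists 1%N, 0%N; split=> //; split; first by rewrite expg1; exact: bal_R.
by rewrite expg0 invgK mulg1; exact: hs.1.
Qed.
Lemma BD1 : BD 1 0.
Proof. exists 0%N, 0%N; split=> //; rewrite !expg0 !mulg1 !invg1; split; exact: (M1 hM). Qed.

Definition DWord (g : G) (n : nat) := exists w : seq (bool * G),
  (forall e, e \in w -> Div M D e.2) /\ eval_word w = g /\ (size w <= n)%N.

Lemma DW_mono g n m : DWord g n -> (n <= m)%N -> DWord g m.
Proof. case=> w [h1 [h2 h3]] h; exists w; split=> //; split=> //; exact: leq_trans h3 h. Qed.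
Lemma eval_cat (w1 w2 : seq (bool * G)) : eval_word (w1 ++ w2) = eval_word w1 * eval_word w2.
Proof. by rewrite /eval_word map_cat prodl_cat. Qed.
Lemma DW_mul g1 g2 n1 n2 : DWord g1 n1 -> DWord g2 n2 -> DWord (g1 * g2) (n1 + n2).
Proof.
case=> w1 [a1 [b1 c1]] [w2 [a2 [b2 c2]]]; exists (w1 ++ w2); split.
  by move=> e; rewrite mem_cat => /orP [] ?; [exact: a1 | exact: a2].
by rewrite eval_cat b1 b2 size_cat; split=> //; exact: leq_add.
Qed.
Lemma DW_letter s : Div M D s -> DWord s 1 /\ DWord s^-1 1.
Proof.
move=> hs; split.
  exists [:: (false, s)]; split; first by move=> e; rewrite inE => /eqP ->.
  by rewrite /eval_word /= mulg1.
exists [:: (true, s)]; split; first by move=> e; rewrite inE => /eqP ->.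
by rewrite /eval_word /= mulg1.
Qed.
Lemma DW1 : DWord 1 0.
Proof. by exists [::]; split. Qed.

Lemma DW_M r y : M y -> leL M y (D ^+ r) -> DWord y r /\ DWord y^-1 r.
Proof.
elim: r y => [|r IH] y My hy.
  have -> : y = 1 by apply: (Manti hM My); apply/leM1; rewrite expg0 in hy.
  by rewrite invg1; split; exact: DW1.
have [y1 hy1] := (hlat y (D ^+ r)).1.
have My1 : M y1.
  apply: (@le1E _ M); apply: (meet_ge hy1); apply: (@le1I _ M); [exact: My | exact: MDk].
have [IH1 IH2] := IH y1 My1 (meet_r hy1).
have hle : leL M y (y1 * D).
  have := meet_ge (meet_rmul 1 hy1) (le_mulM y (MDk 1)) _.
  rewrite expg1; apply; by rewrite -expgSr.
have ht : Div M D (y1^-1 * y) by split; [exact: meet_l hy1 | rewrite /leL; apply: (Mtr (M:=M) hle); gn].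
have [t1 t2] := DW_letter ht.
split.
  have -> : y = y1 * (y1^-1 * y) by gn.
  by rewrite -addn1; exact: DW_mul.
have -> : y^-1 = (y1^-1 * y)^-1 * y1^-1 by gn.
by rewrite -add1n; exact: DW_mul.
Qed.

Lemma DW_of_BD g n : BD g n -> DWord g n.
Proof.
case=> j [k [hn [a b]]].
set m := D ^+ j * g.
have hm : leL M m (D ^+ j * D ^+ k) by rewrite /leL /m; apply: Meq b; gn.
have [m1 hm1] := (hlat m (D ^+ j)).1.
have Mm1 : M m1 by apply: (@le1E _ M); apply: (meet_ge hm1); apply: (@le1I _ M); [exact: a | exact: MDk].
have hle : leL M m (m1 * D ^+ k).
  exact: meet_ge (meet_rmul k hm1) (le_mulM m (MDk k)) hm.
have Mm2 : M (m1^-1 * m) by exact: meet_l hm1.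
have hk : leL M (m1^-1 * m) (D ^+ k) by rewrite /leL; apply: (Mtr (M:=M) hle); gn.
have [d2 _] := DW_M Mm2 hk.
have hc1 : M (m1^-1 * D ^+ j) := meet_r hm1.
have hc2 : leL M (m1^-1 * D ^+ j) (D ^+ j).
  by rewrite /leL; apply: (Mtr (M:=M) (MconjVk j Mm1)); gn.
have [_ dc] := DW_M hc1 hc2.
have -> : g = (m1^-1 * D ^+ j)^-1 * (m1^-1 * m) by rewrite /m; gn.
exact: DW_mono (DW_mul dc d2) hn.
Qed.

Lemma BD_of_DW g n : DWord g n -> BD g n.
Proof.
case=> w [hw [hg hs]]; rewrite -hg; apply: (BD_mono _ hs); clear hs hg.
elim: w hw => [|e w IH] hw /=; first exact: BD1.
have he : Div M D e.2 by apply: hw; rewrite inE eqxx.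
have hw' : forall e', e' \in w -> Div M D e'.2 by move=> e' h; apply: hw; rewrite inE h orbT.
rewrite /eval_word /= -/(eval_word w) -add1n.
apply: BD_mul (IH hw').
by case: (e.1); [exact: (BD_letter he).2 | exact: (BD_letter he).1].
Qed.

End Gar.

Lemma min_exists (P : nat -> Prop) : (exists n, P n) -> exists n, P n /\ forall m, P m -> (n <= m)%N.
Proof.
case=> n0 h0.
elim: n0 {-2}n0 (leqnn n0) h0 => [|N IH] n hn Pn.
  by exists n; split=> // m _; move: hn; rewrite leqn0 => /eqP ->.
case: (classic (exists m, (m < n)%N /\ P m)) => [[m [hm Pm]]|hno].
  by apply: (IH m) => //; rewrite -ltnS; exact: leq_trans hm hn.
exists n; split=> // m Pm; rewrite leqNgt; apply/negP => hmn; apply: hno; by exists m.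
Qed.

Section WL.
Variable G : groupType.
Variable M : G -> Prop.
Variable D : G.
Hypothesis hM : pos_cone M.
Hypothesis hbal : balanced M D.
Hypothesis hgen : forall a, M a <-> mgen (Div M D) a.
Hypothesis hlat : lattice_L M.
Hypothesis hall : forall g, ggen (Div M D) g.

Let S := fun x => Div M D x /\ x <> 1.

Lemma DW_of_word w g : is_word S w g -> DWord M D g (size w).
Proof. case=> h1 h2; exists w; split=> // e he; exact: (h1 e he).1. Qed.

Lemma word_of_DW g n : DWord M D g n -> exists w, is_word S w g /\ (size w <= n)%N.
Proof.
case=> w [hw [hg hs]]; suff: exists w', is_word S w' g /\ (size w' <= size w)%N.
  by case=> w' [h1 h2]; exists w'; split=> //; exact: leq_trans h2 hs.
rewrite -hg; clear hg hs.
elim: w hw => [|e w IH] hw; first by exists [::]; split=> //; split.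
have he : Div M D e.2 by apply: hw; rewrite inE eqxx.
have hw' : forall e', e' \in w -> Div M D e'.2 by move=> e' h; apply: hw; rewrite inE h orbT.
have [w' [[h1 h2] h3]] := IH hw'.
have ev : eval_word (e :: w) = (if e.1 then e.2^-1 else e.2) * eval_word w by [].
case: (eqVneq e.2 1) => [e1|ne].
  exists w'; split; last by apply: leq_trans h3 _; exact: leqnSn.
  split=> //; rewrite ev e1 h2; case: (e.1); gn.
exists (e :: w'); split; last by rewrite /= ltnS.
split; last by rewrite ev -h2.
move=> x; rewrite inE => /orP [/eqP ->|hx]; [split; [exact: he | exact/eqP] | exact: h1].
Qed.

Lemma DW_all g : exists n, DWord M D g n.
Proof.
elim: (hall g) => [|x y hx _ [n hn]|x y hx _ [n hn]]; first by exists 0%N; exact: DW1.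
  exists (1 + n)%N; apply: DW_mul hn; exact: (DW_letter hx).1.
exists (1 + n)%N; apply: DW_mul hn; exact: (DW_letter hx).2.
Qed.

Lemma wl_exists g : exists n, word_length S g n.
Proof.
have [n0 h0] := DW_all g.
have [w0 [hw0 _]] := word_of_DW h0.
have [n [[w [hw hs]] hmin]] := @min_exists (fun n => exists w, is_word S w g /\ size w = n) (ex_intro _ _ (ex_intro _ w0 (conj hw0 (erefl _)))).
exists n; split; first by exists w.
move=> w' hw'; exact: hmin (ex_intro _ w' (conj hw' (erefl _))).
Qed.

Lemma wl_DW g n : word_length S g n -> DWord M D g n.
Proof. case=> [[w [hw <-]] _]; exact: DW_of_word. Qed.

Lemma wl_min g n m : word_length S g n -> DWord M D g m -> (n <= m)%N.
Proof. move=> [_ h] /word_of_DW [w [hw hs]]; exact: leq_trans (h w hw) hs. Qed.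

Lemma wl_BD g n : word_length S g n -> BD M D g n.
Proof. move/wl_DW; exact: BD_of_DW. Qed.

Lemma wl_BDmin g n m : word_length S g n -> BD M D g m -> (n <= m)%N.
Proof. move=> h /(DW_of_BD hM hbal hgen hlat); exact: wl_min. Qed.

End WL.

Section Par.
Variable G : groupType.
Variable M : G -> Prop.
Variables D d : G.
Hypothesis hM : pos_cone M.
Hypothesis hbal : balanced M D.
Hypothesis hgen : forall a, M a <-> mgen (Div M D) a.
Hypothesis hlat : lattice_L M.
Hypothesis hnoeth : noetherian M.
Hypothesis hd : M d.
Hypothesis hdbal : balanced M d.
Hypothesis hdiv : forall b, Div M d b <-> (Div M D b /\ Nsub M d b).

Local Notation N := (Nsub M d).
Local Notation H := (Hsub M d).
Definition om := d^-1 * D.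

Local Ltac Mby h := apply: (@Mtr _ M _ _ h); gn.

Lemma NM x : N x -> M x.
Proof. rewrite /Nsub; elim=> [|a b ha _ IH]; [exact: (M1 hM) | exact: (MM hM (Div_M ha) IH)]. Qed.
Lemma Nmul x y : N x -> N y -> N (x * y). Proof. exact: mgen_mul. Qed.
Lemma Nd : N d. Proof. exact: (mgen_sub (Div_self hM hdbal)). Qed.
Lemma Ndk k : N (d ^+ k).
Proof. elim: k => [|k IH]; [exact: mgen1 | rewrite expgS; exact: (Nmul Nd IH)]. Qed.
Lemma NconjV x : N x -> N (d^-1 * x * d).
Proof. apply: mgen_conj => s; exact: Div_conjV. Qed.
Lemma Nconj x : N x -> N (d * x * d^-1).
Proof.
move=> h.
have hS : forall s, Div M d s -> Div M d (d^-1^-1 * s * d^-1).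
  by move=> s hs; rewrite invgK; exact: Div_conj.
by have := mgen_conj hS h; rewrite invgK.
Qed.
Lemma NconjVk k x : N x -> N ((d ^+ k)^-1 * x * d ^+ k).
Proof. move=> h; exact: (conj_iter NconjV). Qed.
Lemma Nconjk k x : N x -> N (d ^+ k * x * (d ^+ k)^-1).
Proof. move=> h; exact: (conj_iter' Nconj). Qed.
Lemma Mdk k : M (d ^+ k). Proof. exact: NM (Ndk k). Qed.

Lemma dDivD : Div M D d. Proof. exact: ((hdiv d).1 (Div_self hM hdbal)).1. Qed.
Lemma Mom : M om. Proof. exact: dDivD.2. Qed.
Lemma om_le_D : leL M om D.
Proof. rewrite /leL; Mby (MconjV hbal hgen hd). Qed.
Lemma d_le_D : leL M d D. Proof. exact: dDivD.2. Qed.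
Lemma eD : D = d * om. Proof. by rewrite /om; gn. Qed.

Lemma N_le n : N n -> exists j, leL M n (d ^+ j).
Proof.
rewrite /Nsub; elim=> [|s y hs _ [j hj]]; first by exists 0%N; exact: (le_refl hM).
exists j.+1; apply: (le_trans hM (y := s * d ^+ j)); first by apply/le_mul2l.
rewrite /leL expgS.
have h := NM (NconjVk j (mgen_sub (Div_compl hdbal hs))); Mby h.
Qed.
Lemma d_mono j i : leL M (d ^+ j) (d ^+ (j + i)).
Proof. rewrite /leL expgnDr; Mby (Mdk i). Qed.
Lemma N_le_ge n : N n -> exists j0, forall j, (j0 <= j)%N -> leL M n (d ^+ j).
Proof.
case/N_le=> j0 hj; exists j0 => j hj0.
apply: (le_trans hM hj); rewrite -(subnKC hj0); exact: d_mono.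
Qed.

Lemma meet_d_om t : leL M t d -> leL M t om -> leL M t 1.
Proof.
move=> h1 h2; have [c hc] := (hlat t 1).2.
have c1 := join_le hc h1 (le1I hd).
have c2 := join_le hc h2 (le1I Mom).
have Mc : M c := le1E (join_r hc).
have Nc : N c by apply: mgen_sub; split.
have hdc : Div M D (d * c).
  split; first exact: (MM hM hd Mc).
  by rewrite /leL; move: c2; rewrite /leL /om => c2; Mby c2.
have hdc' := (hdiv (d * c)).2 (conj hdc (Nmul Nd Nc)).
have h := hdc'.2; rewrite /leL in h.
have e : c = 1 by apply: (Manti hM Mc); Mby h.
by rewrite -e; exact: join_l hc.
Qed.

Lemma J y : leL M d y -> leL M om y -> leL M D y.
Proof.
move=> h1 h2; have [c hc] := (hlat d om).2.
suff -> : D = c by exact: join_le hc h1 h2.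
have hcD := join_le hc d_le_D om_le_D.
set t := D * (c^-1 * D) * D^-1.
have Mt : M t by apply: (Mconj hbal hgen); exact: hcD.
have hc2 : M (D * (om^-1 * c) * D^-1) by apply: (Mconj hbal hgen); exact: join_r hc.
have Nt : N t.
  apply: mgen_sub; apply: (bal_L hdbal) => //; move: hc2; rewrite /t /om => hc2; Mby hc2.
have hc1 : M (d^-1 * c) by exact: join_l hc.
have htd : Div M D (t * d).
  split; first exact: (MM hM Mt hd).
  rewrite /leL /t; Mby hc1.
have htd' := (hdiv (t * d)).2 (conj htd (Nmul Nt Nd)).
have h := bal_R hdbal htd'.
have t1 : t = 1 by apply: (Manti hM Mt); Mby h.
have : c = D * (D^-1 * t * D)^-1 by rewrite /t; gn.
by rewrite t1; gn.
Qed.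

Lemma F k g : M g -> leL M D (d ^+ k * g) -> leL M om g.
Proof.
elim: k g => [|k IH] g Mg h.
  by rewrite expg0 mul1g in h; exact: (le_trans hM om_le_D h).
move: h; rewrite expgS -mulgA {1}eD => /le_mul2l h.
case: k IH h => [|k] IH h; first by rewrite expg0 mul1g in h.
apply: IH => //; apply: J => //.
rewrite /leL expgS; Mby (MM hM (Mdk k) Mg).
Qed.

Lemma H1 : H 1. Proof. exact: ggen1. Qed.
Lemma H_mul x y : H x -> H y -> H (x * y).
Proof.
rewrite /Hsub; elim=> [|a b ha _ IH|a b ha _ IH] hy; first by rewrite mul1g.
  rewrite -mulgA; exact: (ggenM ha (IH hy)).
rewrite -mulgA; exact: (ggenV ha (IH hy)).
Qed.
Lemma H_s s : Div M d s -> H s.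
Proof. by move=> hs; rewrite -(mulg1 s); exact: (ggenM hs (ggen1 _)). Qed.
Lemma H_sV s : Div M d s -> H s^-1.
Proof. by move=> hs; rewrite -(mulg1 s^-1); exact: (ggenV hs (ggen1 _)). Qed.
Lemma H_inv x : H x -> H x^-1.
Proof.
rewrite /Hsub; elim=> [|a b ha _ IH|a b ha _ IH]; first by rewrite invg1; exact: H1.
  by rewrite invgM; apply: H_mul IH (H_sV ha).
by rewrite invgM invgK; apply: H_mul IH (H_s ha).
Qed.
Lemma H_N x : N x -> H x.
Proof. rewrite /Nsub /Hsub; elim=> [|a b ha _ IH]; [exact: H1 | exact: (ggenM ha IH)]. Qed.
Lemma H_dkV k : H (d ^+ k)^-1. Proof. exact/H_inv/H_N/Ndk. Qed.

Lemma Hform g : H g -> exists k, N (d ^+ k * g).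
Proof.
rewrite /Hsub; elim=> [|x y hx _ [k hk]|x y hx _ [k hk]].
- by exists 0%N; rewrite mulg1; exact: mgen1.
- exists k; have -> : d ^+ k * (x * y) = (d ^+ k * x * (d ^+ k)^-1) * (d ^+ k * y) by gn.
  exact: Nmul (Nconjk k (mgen_sub hx)) hk.
- exists k.+1; have -> : d ^+ k.+1 * (x^-1 * y) = (d ^+ k * (d * x^-1) * (d ^+ k)^-1) * (d ^+ k * y).
    by rewrite expgSr; gn.
  exact: Nmul (Nconjk k (mgen_sub (Div_complR hdbal hx))) hk.
Qed.
Lemma Hform_ge g : H g -> exists k0, forall k, (k0 <= k)%N -> N (d ^+ k * g).
Proof.
case/Hform=> k0 hk; exists k0 => k hk0.
rewrite -(subnK hk0) expgnDr -mulgA; exact: Nmul (Ndk _) hk.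
Qed.

Lemma head j t : leL M t D -> leL M t (d ^+ j) -> leL M t d.
Proof.
elim: j t => [|j IH] t h1 h2.
  by apply: (le_trans hM h2); rewrite expg0; exact: le1I.
have [c hc] := (hlat t d).2.
have Mdj : M (d ^+ j) := Mdk j.
have c1 : leL M c (d * d ^+ j).
  apply: (join_le hc); first by rewrite -expgS.
  exact: le_mulM.
have c2 : leL M c D := join_le hc h1 d_le_D.
have c3 : leL M c (d * D).
  apply: (join_le hc); last exact: le_mulM (MD hbal).
  apply: (le_trans hM h1); rewrite /leL; Mby (MconjV hbal hgen hd).
have y1 : leL M (d^-1 * c) (d ^+ j) := (le_lcancel M d c (d ^+ j)).1 c1.
have y2 : leL M (d^-1 * c) D := (le_lcancel M d c D).1 c3.
have y3 : leL M (d^-1 * c) om.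
  by apply: ((le_lcancel M d c om).1); rewrite -eD.
have y4 := meet_d_om (IH _ y2 y1) y3.
apply: (le_trans hM (join_l hc)).
by have := (le_lcancel M d c 1).2 y4; rewrite mulg1.
Qed.

Lemma Mprefix m : M m -> m <> 1 -> exists s, Div M D s /\ s <> 1 /\ leL M s m.
Proof.
move/hgen; elim=> [|x y hx hy IH] hne; first by [].
case: (eqVneq x 1) => [x1|xne].
  rewrite x1 mul1g in hne *; exact: IH.
exists x; split=> //; split; first exact/eqP.
by apply: le_mulM; apply/hgen.
Qed.
Lemma Nprefix m : N m -> m <> 1 -> exists s, Div M d s /\ s <> 1 /\ leL M s m.
Proof.
rewrite /Nsub; elim=> [|x y hx hy IH] hne; first by [].
case: (eqVneq x 1) => [x1|xne].
  rewrite x1 mul1g in hne *; exact: IH.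
exists x; split=> //; split; first exact/eqP.
by apply: le_mulM; exact: NM.
Qed.

Lemma noeth_ind (P : G -> Prop) :
  (forall m, M m -> (forall s m', Div M D s -> s <> 1 -> M m' -> m = s * m' -> P m') -> P m) ->
  forall m, M m -> P m.
Proof.
move=> hP m Mm; have [n hn] := hnoeth Mm.
elim: n m Mm hn => [|n IH] m Mm hn; apply: hP => // s m' hs hs1 Mm' e.
  have [l [hl1 hl2]] : exists l : seq G, (forall x, x \in l -> M x /\ x <> 1) /\ prodl l = m'.
    case: (eqVneq m' 1) => [->|ne]; first by exists [::].
    exists [:: m']; split; last by rewrite /= mulg1.
    by move=> x; rewrite inE => /eqP ->; split=> //; exact/eqP.
  have hsl : forall x, x \in s :: l -> M x /\ x <> 1.
    move=> x; rewrite inE => /orP [/eqP ->|hx]; [split=> //; exact: hs.1 | exact: hl1].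
  have hpl' : prodl (s :: l) = m by rewrite /= hl2 e.
  by have := hn _ hsl hpl'.
apply: IH => // l hl hpl.
have hsl : forall x, x \in s :: l -> M x /\ x <> 1.
  move=> x; rewrite inE => /orP [/eqP ->|hx]; [split=> //; exact: hs.1 | exact: hl].
have hpl' : prodl (s :: l) = m by rewrite /= hpl e.
by have := hn _ hsl hpl'.
Qed.

Lemma C2 j m : M m -> leL M m (d ^+ j) -> N m.
Proof.
move=> Mm; move: m Mm; apply: noeth_ind => m Mm IH hm.
case: (eqVneq m 1) => [->|ne]; first exact: mgen1.
have ne' : m <> 1 by apply/eqP.
have [s [hs [hs1 hsm]]] := Mprefix Mm ne'.
have hsd : leL M s d := head hs.2 (le_trans hM hsm hm).
have hsd' : Div M d s by split=> //; exact: hs.1.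
have Mm' : M (s^-1 * m) := hsm.
have -> : m = s * (s^-1 * m) by gn.
apply: (mgenM hsd'); apply: (IH s) => //; first by gn.
apply: (le_trans hM (y := s^-1 * d ^+ j)); first exact/le_mul2l.
rewrite /leL; Mby (NM (NconjVk j (mgen_sub hsd'))).
Qed.

Lemma C2' m n : M m -> leL M m n -> N n -> N m.
Proof. move=> Mm hmn /N_le [j hj]; exact: (C2 Mm (le_trans hM hmn hj)). Qed.

Lemma HM_N g : H g -> M g -> N g.
Proof.
move=> Hg Mg; have [k hk] := Hform Hg.
have [j hj] := N_le hk.
apply: (C2 (j := j) Mg).
have : leL M (d ^+ k * g) (d ^+ (k + j)).
  apply: (le_trans hM hj); rewrite addnC; exact: d_mono.
by rewrite expgnDr => /le_mul2l.
Qed.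

Lemma H_join g1 g2 c : H g1 -> H g2 -> is_joinL M g1 g2 c -> H c.
Proof.
move=> h1 h2 hc.
have [k1 hk1] := Hform_ge h1; have [k2 hk2] := Hform_ge h2.
set k := (k1 + k2)%N.
have n1 := hk1 k (leq_addr _ _); have n2 := hk2 k (leq_addl _ _).
have hc' := join_lmul (d ^+ k) hc.
have [j1 hj1] := N_le_ge n1; have [j2 hj2] := N_le_ge n2.
have Mc : M (d ^+ k * c) by apply: le1E; apply: (le_trans hM _ (join_l hc')); exact: le1I (NM n1).
have Nc : N (d ^+ k * c).
  apply: (C2 (j := j1 + j2) Mc); apply: (join_le hc'); [apply: hj1 | apply: hj2].
    exact: leq_addr.
  exact: leq_addl.
have -> : c = (d ^+ k)^-1 * (d ^+ k * c) by gn.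
exact: H_mul (H_dkV k) (H_N Nc).
Qed.

Lemma H_meet g1 g2 c : H g1 -> H g2 -> is_meetL M g1 g2 c -> H c.
Proof.
move=> h1 h2 hc.
have [k1 hk1] := Hform_ge h1; have [k2 hk2] := Hform_ge h2.
set k := (k1 + k2)%N.
have n1 := hk1 k (leq_addr _ _); have n2 := hk2 k (leq_addl _ _).
have hc' := meet_lmul (d ^+ k) hc.
have Mc : M (d ^+ k * c).
  by apply: le1E; apply: (meet_ge hc'); apply: le1I; apply: NM.
have Nc : N (d ^+ k * c) := C2' Mc (meet_l hc') n1.
have -> : c = (d ^+ k)^-1 * (d ^+ k * c) by gn.
exact: H_mul (H_dkV k) (H_N Nc).
Qed.

Lemma Glemma g a : H g -> is_meetL M a d 1 -> leL M g a -> leL M g 1.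
Proof.
move=> Hg ha hga; have [c hc] := (hlat g 1).2.
have Hc : H c := H_join Hg H1 hc.
have Mc : M c := le1E (join_r hc).
have Nc : N c := HM_N Hc Mc.
have hca : leL M c a := join_le hc hga (meet_l ha).
suff e : c = 1 by rewrite -e; exact: join_l hc.
apply: NNPP => ne.
have [s [hs [hs1 hsc]]] := Nprefix Nc ne.
have hs' : leL M s 1 := meet_ge ha (le_trans hM hsc hca) hs.2.
by apply: hs1; apply: (Manti hM hs.1); move/leM1: hs'.
Qed.

Lemma om_le_nom n : N n -> leL M om (n * om).
Proof. move=> hn; rewrite /leL /om; Mby (MconjV hbal hgen (NM (Nconj hn))). Qed.

Lemma Klem s r : Div M d s -> M r -> leL M om (s * r) -> leL M om r.
Proof.
move=> hs Mr h.
set s' := d * s * d^-1.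
have hs' : Div M d s' := Div_conj hdbal hs.
set sb := s'^-1 * d.
have hsb : Div M d sb := Div_compl hdbal hs'.
have h1 : leL M D (s' * (d * r)).
  have -> : s' * (d * r) = d * (s * r) by rewrite /s'; gn.
  by rewrite eD; apply/le_mul2l.
have h2 : leL M (sb * om) (d * r).
  have := (le_lcancel M s' D (d * r)).1 h1.
  by have -> : s'^-1 * D = sb * om by rewrite /sb /om; gn.
have h3 : leL M om (sb * om) := om_le_nom (mgen_sub hsb).
have h4 : leL M D (d * r) := J (le_mulM d Mr) (le_trans hM h3 h2).
by move: h4; rewrite eD => /le_mul2l.
Qed.

Lemma K_N n r : N n -> M r -> leL M om (n * r) -> leL M om r.
Proof.
rewrite /Nsub => hn; elim: hn r => [|x y hx hy IH] r Mr h; first by rewrite mul1g in h.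
apply: IH => //; apply: (Klem hx (MM hM (NM hy) Mr)); by rewrite mulgA.
Qed.

Lemma F1core g a : H g -> M a -> ~ leL M om a -> ~ leL M g (a * D^-1).
Proof.
move=> Hg Ma hna hga; apply: hna.
have [k hk] := Hform Hg.
have h1 : leL M (d ^+ k)^-1 g by rewrite /leL invgK; exact: NM.
have := le_trans hM h1 hga; rewrite /leL invgK => h2.
apply: (F (k := k)) => //; rewrite /leL; Mby (MconjV hbal hgen h2).
Qed.

Local Notation BD := (BD M D).
Variables (a : G) (Q : nat) (u beta : G).
Let q := Q.+1.
Let th := a * (D ^+ q)^-1.
Hypothesis Ma : M a.
Hypothesis ha : is_meetL M a d 1.
Hypothesis hna : ~ leL M om a.
Hypothesis hx : M th^-1.
Hypothesis hu : Div M D u.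
Hypothesis Hb : H beta.
Hypothesis hbq : BD (th^-1 * beta) q.

Let b := th * u * D ^+ q.
Lemma Mb : M b.
Proof. rewrite /b /th; Mby (MM hM Ma (MconjVk hbal hgen q (Div_M hu))). Qed.

Lemma noLowU g k : H g -> (k < Q)%N -> ~ M (g^-1 * (th * u) * D ^+ k).
Proof.
move=> Hg hk h.
have [r hQ] : exists r, Q = (k.+1 + r)%N by exists (Q - k.+1)%N; rewrite subnKC.
apply: (F1core Hg Ma hna).
have hY : M ((D ^+ k)^-1 * (u^-1 * D) * D ^+ k * D ^+ r).
  exact: (MM hM (MconjVk hbal hgen k hu.2) (MDk hM hbal r)).
have := MM hM h hY; rewrite /leL /th /q hQ => h'; apply: (Mtr (M:=M) h').
rewrite expgSr expgnDr expgS; gn.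
Qed.

Lemma noLow0 g k : H g -> (k <= Q)%N -> ~ M (g^-1 * th * D ^+ k).
Proof.
move=> Hg hk h.
have [r hQ] : exists r, Q = (k + r)%N by exists (Q - k)%N; rewrite subnKC.
apply: (F1core Hg Ma hna).
have := MM hM h (MDk hM hbal r); rewrite /leL /th /q hQ => h'; apply: (Mtr (M:=M) h').
rewrite expgSr expgnDr; gn.
Qed.

Lemma lower0 g m : H g -> BD (th^-1 * g) m -> (q <= m)%N.
Proof.
move=> Hg [j [k [hjk [_ h2]]]].
rewrite leqNgt; apply/negP => hm.
apply: (noLow0 (k := k) Hg); last by Mby h2.
by rewrite -ltnS; apply: leq_ltn_trans hm; apply: leq_trans hjk; exact: leq_addl.
Qed.

Lemma beta_props : M (th^-1 * beta) /\ leL M beta 1.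
Proof.
case: hbq => j [k [hjk [h1 h2]]].
have hkq : (q <= k)%N.
  rewrite leqNgt; apply/negP => hk; apply: (noLow0 (k := k) Hb) => //; by Mby h2.
have ej : j = 0%N by lia.
have ek : k = q by lia.
subst j k; split; first by move: h1; rewrite expg0 mul1g.
apply: (Glemma Hb ha).
rewrite /leL; Mby h2.
Qed.


Let BDmul := BD_mul hM hbal hgen.
Let BDlet := BD_letter hbal.

Lemma zM : M (th^-1 * beta). Proof. exact: beta_props.1. Qed.
Lemma beta1 : leL M beta 1. Proof. exact: beta_props.2. Qed.
Lemma Nbeta : N beta^-1.
Proof. apply: HM_N; [exact: H_inv Hb | exact/leM1/beta1]. Qed.

Lemma lowerU g m : H g -> BD ((th * u)^-1 * g) m -> (Q <= m)%N.
Proof.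
move=> Hg h.
have h' := BDmul (BDlet hu).1 h.
have e : u * ((th * u)^-1 * g) = th^-1 * g by gn.
rewrite e in h'; have := lower0 Hg h'; rewrite /q; lia.
Qed.

Lemma shape g m : H g -> BD ((th * u)^-1 * g) m ->
  exists j k, (j + k <= m)%N /\ (Q <= k)%N /\ M (D ^+ j * ((th * u)^-1 * g)) /\ M (g^-1 * (th * u) * D ^+ k).
Proof.
move=> Hg [j [k [hjk [h1 h2]]]]; exists j, k; split=> //; split; last first.
  by split=> //; move: h2; rewrite invgM invgK mulgA.
rewrite leqNgt; apply/negP => hk; apply: (noLowU (k := k) Hg) => //.
by move: h2; rewrite invgM invgK mulgA.
Qed.

Definition Lo g := M ((th * u)^-1 * g).
Definition Lo1 g := M (D * ((th * u)^-1 * g)).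
Definition Up0 g := M (g^-1 * b).
Definition Up1 g := M (g^-1 * b * D^-1).

Lemma Up0E g : M (g^-1 * (th * u) * D ^+ q) <-> Up0 g.
Proof. by rewrite /Up0 /b !mulgA. Qed.
Lemma Up1E g : M (g^-1 * (th * u) * D ^+ Q) <-> Up1 g.
Proof. rewrite /Up1 /b /q expgSr; by rewrite !mulgA mulgK. Qed.

Lemma BDa g : Lo g -> Up1 g -> BD ((th * u)^-1 * g) Q.
Proof.
move=> h1 h2; move: (proj2 (@Up1E g) h2) => {}h2; exists 0%N, Q; split=> //; split; first by rewrite expg0 mul1g.
Mby h2.
Qed.
Lemma BDb1 g : Lo g -> Up0 g -> BD ((th * u)^-1 * g) q.
Proof.
move=> h1 h2; move: (proj2 (@Up0E g) h2) => {}h2; exists 0%N, q; split=> //; split; first by rewrite expg0 mul1g.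
Mby h2.
Qed.
Lemma BDb2 g : Lo1 g -> Up1 g -> BD ((th * u)^-1 * g) q.
Proof.
move=> h1 h2; move: (proj2 (@Up1E g) h2) => {}h2; exists 1%N, Q; split; first by rewrite add1n.
split; first by rewrite expg1.
Mby h2.
Qed.

Lemma BD_unit y : M (d * y) -> M y^-1 -> BD y 1.
Proof.
move=> h1 h2; exists 1%N, 0%N; split=> //; split.
  rewrite expg1; Mby (MM hM (bal_R hbal dDivD) h1).
by rewrite expg0 mulg1.
Qed.

Lemma om_b_beta : leL M om b -> leL M om (beta^-1 * b).
Proof. move=> h; apply: (le_trans hM (om_le_nom Nbeta)); exact/le_mul2l. Qed.

Lemma om_b g0 : H g0 -> Up1 g0 -> leL M om b.
Proof.
move=> Hg h; apply: NNPP => hn.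
by apply: (F1core Hg Mb hn); rewrite /leL mulgA.
Qed.

Lemma Hdinv : H d^-1. Proof. exact/H_inv/H_N/Nd. Qed.

Lemma beta1_props g0 : H g0 -> Lo g0 -> exists b1, H b1 /\ Lo b1 /\ Up0 b1 /\
   N (beta^-1 * b1) /\ BD (beta^-1 * b1) 1.
Proof.
move=> Hg0 Lg0.
have [b1 hb1] := (hlat beta (th * u)).2.
have [c0 hc0] := (hlat beta g0).2.
have Hc0 : H c0 := H_join Hb Hg0 hc0.
have hb1c0 : leL M b1 c0.
  apply: (join_le hb1 (join_l hc0)); apply: (le_trans hM _ (join_r hc0)); exact: Lg0.
have Mcc : M (beta^-1 * b1) := join_l hb1.
have Nc0 : N (beta^-1 * c0).
  apply: HM_N; [exact: H_mul (H_inv Hb) Hc0 | exact: join_l hc0].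
have Ncc : N (beta^-1 * b1).
  apply: (C2' Mcc _ Nc0); exact: ((le_mul2l M beta^-1 b1 c0).2 hb1c0).
have Hb1 : H b1 by have := H_mul Hb (H_N Ncc); rewrite mulVKg.
exists b1; split=> //; split; first exact: join_r hb1.
split.
  apply: (join_le hb1); first exact: (le_trans hM beta1 (le1I Mb)).
  by rewrite /leL /b; Mby (MDk hM hbal q).
split=> //.
exists 0%N, 1%N; split=> //; split; first by rewrite expg0 mul1g.
have : leL M b1 (beta * D).
  apply: (join_le hb1); first exact: le_mulM (MD hbal).
  rewrite /leL; Mby (MM hM hu.2 (MconjV hbal hgen zM)).
by rewrite expg1 /leL => hh; Mby hh.
Qed.

Theorem core : exists b', H b' /\
  (exists N0, BD ((th * u)^-1 * b') N0 /\ forall g m, H g -> BD ((th * u)^-1 * g) m -> (N0 <= m)%N) /\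
  BD (beta^-1 * b') 2.
Proof.
case: (classic (exists g0, H g0 /\ Lo g0 /\ Up1 g0)) => [[g0 [Hg0 [Lg0 Ug0]]]|nA].
  have omb := om_b Hg0 Ug0.
  have [b1 [Hb1 [Lb1 [U0b1 [Ncc BDcc]]]]] := beta1_props Hg0 Lg0.
  have hU : Up1 (b1 * d^-1).
    have h : leL M om (b1^-1 * b).
      apply: (K_N Ncc) => //.
      have e : (beta^-1 * b1) * (b1^-1 * b) = beta^-1 * b by rewrite -mulgA mulVKg.
      by rewrite e; exact: (om_b_beta omb).
    rewrite /Up1; have hh := Mconj hbal hgen h; rewrite /om in hh; Mby hh.
  have [j hj] := (hlat (b1 * d^-1) g0).2.
  have [b2 hb2] := (hlat b1 j).1.
  have Hj0 : H j := H_join (H_mul Hb1 Hdinv) Hg0 hj.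
  have Hb2 : H b2 := H_meet Hb1 Hj0 hb2.
  exists b2; split=> //; split.
    exists Q; split; last by move=> g m Hg; exact: lowerU.
    apply: BDa.
      apply: (meet_ge hb2 Lb1); apply: (le_trans hM Lg0 (join_r hj)).
    have hjU : leL M j (b * D^-1).
      apply: (join_le hj); rewrite /leL.
        by move: hU; rewrite /Up1 => hh; Mby hh.
      by move: Ug0; rewrite /Up1 => hh; Mby hh.
    have hh := le_trans hM (meet_r hb2) hjU; rewrite /leL in hh.
    by rewrite /Up1; Mby hh.
  have -> : beta^-1 * b2 = (beta^-1 * b1) * (b1^-1 * b2) by gn.
  apply: (BDmul BDcc); apply: BD_unit.
    have : leL M (b1 * d^-1) b2.
      apply: (meet_ge hb2 _ (join_l hj)); rewrite /leL; Mby hd.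
    by rewrite /leL => hh; Mby hh.
  by have := meet_l hb2; rewrite /leL => hh; Mby hh.
have lowq : forall g m, H g -> BD ((th * u)^-1 * g) m -> (q <= m)%N.
  move=> g m Hg hb; have [j [k [hjk [hQk [h1 h2]]]]] := shape Hg hb.
  rewrite leqNgt; apply/negP => hm; apply: nA; exists g; split=> //.
  have ek : k = Q by move: hm; rewrite /q; lia.
  have ej : j = 0%N by move: hm; rewrite /q; lia.
  subst j k; split; first by move: h1; rewrite expg0 mul1g.
  exact: (proj1 (@Up1E g) h2).
case: (classic (exists g0, H g0 /\ Lo g0 /\ Up0 g0)) => [[g0 [Hg0 [Lg0 Ug0]]]|nB1].
  have [b1 [Hb1 [Lb1 [U0b1 [Ncc BDcc]]]]] := beta1_props Hg0 Lg0.
  exists b1; split=> //; split; last exact: (BD_mono BDcc).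
  exists q; split; [exact: BDb1 | exact: lowq].
case: (classic (exists g0, H g0 /\ Lo1 g0 /\ Up1 g0)) => [[g0 [Hg0 [Lg0 Ug0]]]|nB2].
  have omb := om_b Hg0 Ug0.
  have hU : Up1 (beta * d^-1).
    have h := om_b_beta omb.
    rewrite /Up1; have hh := Mconj hbal hgen h; rewrite /om in hh; Mby hh.
  have hL : Lo1 beta.
    rewrite /Lo1; Mby (MM hM (bal_R hbal hu) zM).
  have [j hj] := (hlat (beta * d^-1) g0).2.
  have [b3 hb3] := (hlat beta j).1.
  have Hj0 : H j := H_join (H_mul Hb Hdinv) Hg0 hj.
  have Hb3 : H b3 := H_meet Hb Hj0 hb3.
  exists b3; split=> //; split.
    exists q; split; last exact: lowq.
    apply: BDb2.
      have l1 : leL M (th * u * D^-1) beta by rewrite /leL; move: hL; rewrite /Lo1 => hh; Mby hh.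
      have l2 : leL M (th * u * D^-1) g0 by rewrite /leL; move: Lg0; rewrite /Lo1 => hh; Mby hh.
      have hh := meet_ge hb3 l1 (le_trans hM l2 (join_r hj)); rewrite /leL in hh.
      by rewrite /Lo1; Mby hh.
    have hjU : leL M j (b * D^-1).
      apply: (join_le hj); rewrite /leL.
        by move: hU; rewrite /Up1 => hh; Mby hh.
      by move: Ug0; rewrite /Up1 => hh; Mby hh.
    have hh := le_trans hM (meet_r hb3) hjU; rewrite /leL in hh.
    by rewrite /Up1; Mby hh.
  apply: (BD_mono (n := 1)) => //; apply: BD_unit.
    have : leL M (beta * d^-1) b3.
      apply: (meet_ge hb3 _ (join_l hj)); rewrite /leL; Mby hd.
    by rewrite /leL => hh; Mby hh.
  by have := meet_l hb3; rewrite /leL => hh; Mby hh.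
exists beta; split=> //; split; last first.
  rewrite mulVg; exact: (BD_mono (BD1 D hM)).
exists (1 + q)%N; split.
  have -> : (th * u)^-1 * beta = u^-1 * (th^-1 * beta) by gn.
  exact: (BDmul (BDlet hu).2 hbq).
move=> g m Hg hb; have [j [k [hjk [hQk [h1 h2]]]]] := shape Hg hb.
rewrite add1n leqNgt; apply/negP => hm.
case: (eqVneq k Q) => [ek|nek].
  apply: nB2; exists g; split=> //; subst k; split; last exact: (proj1 (@Up1E g) h2).
  have hj : (j <= 1)%N by move: hm; rewrite /q; lia.
  rewrite /Lo1; case: j hj h1 {hjk} => [|[|j]] // _ h1.
    rewrite expg0 mul1g in h1; exact: (MM hM (MD hbal) h1).
apply: nB1; exists g; split=> //.
have ek : k = q by move: hm nek; rewrite /q; lia.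
have ej : j = 0%N by move: hm nek; rewrite /q; lia.
subst j k; split; first by move: h1; rewrite expg0 mul1g.
exact: (proj1 (@Up0E g) h2).
Qed.


End Par.

Unset Implicit Arguments.

Theorem lemma5p10 (G : groupType) (M : G -> Prop) (Delta delta : G)
  (hG : garside M Delta) (hP : parabolic M Delta delta)
  (alpha beta u theta : G) :
  let S := fun x => Div M Delta x /\ x <> 1 in
  let H := Hsub M delta in
  proj S H alpha beta ->
  S u ->
  HN_reduced M Delta delta theta ->
  (forall g, rcoset H theta g <-> rcoset H alpha g) ->
  M (theta^-1) -> theta <> 1 ->
  exists beta', proj S H (alpha * u) beta' /\
    exists n, dist S beta beta' n /\ (n <= 3)%N.
Proof.
move=> S H hproj hu hHN hcos hthM hth1.
case: hG => hM [hbal [hnoeth [_ [hgen [hall hlat]]]]].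
case: hP => hd hdbal hdiv _.
case: hHN => a [p [[[Ma _] eth] [[_ hmeet] hor]]].
have [Q ep] : exists Q, p = Negz Q /\ ~ leL M (delta^-1 * Delta) a.
  case: p eth hor => [n|Q] eth hor; last by case: hor => [//|[_ h]]; exists Q.
  case: hor => [[en]|[[]]]; subst n.
  by exfalso; apply: hth1; apply: (Manti hM) => //; rewrite eth /= mulg1.
case: ep => ep hna; subst p.
have eth' : theta = a * (Delta ^+ Q.+1)^-1 by [].
clear eth; subst theta.
set th := a * (Delta ^+ Q.+1)^-1.
have [h [Hh eah]] : exists h, H h /\ alpha = h * th.
  by apply/(hcos alpha).2; exists 1; split; [exact: ggen1 | rewrite mul1g].
case: hproj => Hbeta [n0 [hd0 hmin0]].
set bt := h^-1 * beta.
have Hbt : H bt by apply: H_mul (H_inv Hh) Hbeta.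
have e0 : alpha^-1 * beta = th^-1 * bt by rewrite eah /bt; gn.
have hBD0 : BD M Delta (th^-1 * bt) n0 by rewrite -e0; exact: (wl_BD hM hbal hgen hd0).
have [n1 hn1] := wl_exists hall (alpha^-1 * h).
have hn01 : (n0 <= n1)%N := hmin0 h n1 Hh hn1.
have hn1q : (n1 <= Q.+1)%N.
  apply: (wl_BDmin hM hbal hgen hlat hn1).
  have -> : alpha^-1 * h = th^-1 by rewrite eah; gn.
  exists 0%N, Q.+1; split=> //; split; first by rewrite expg0 mul1g.
  by rewrite invgK /th mulgVK.
have hBDq : BD M Delta (th^-1 * bt) Q.+1 := BD_mono hBD0 (leq_trans hn01 hn1q).
have [b' [Hb' [[N0 [hBD hlow]] hdist]]] :=
  core hM hbal hgen hlat hnoeth hd hdbal hdiv Ma hmeet hna hu.1 Hbt hBDq.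
exists (h * b'); split.
  split; first exact: H_mul Hh Hb'.
  have [n' hn'] := wl_exists hall ((alpha * u)^-1 * (h * b')).
  exists n'; split=> //.
  have e1 : (alpha * u)^-1 * (h * b') = (th * u)^-1 * b' by rewrite eah; gn.
  have hn'N0 : (n' <= N0)%N by apply: (wl_BDmin hM hbal hgen hlat hn'); rewrite e1.
  move=> g m Hg hgm; apply: (leq_trans hn'N0).
  have e2 : (alpha * u)^-1 * g = (th * u)^-1 * (h^-1 * g) by rewrite eah; gn.
  apply: (hlow (h^-1 * g)); first exact: H_mul (H_inv Hh) Hg.
  rewrite -e2; exact: (wl_BD hM hbal hgen hgm).
have [n hn] := wl_exists hall (beta^-1 * (h * b')).
exists n; split=> //.
have e3 : beta^-1 * (h * b') = bt^-1 * b' by rewrite /bt; gn.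
have : (n <= 2)%N by apply: (wl_BDmin hM hbal hgen hlat hn); rewrite e3.
move=> h2; exact: leq_trans h2 _.
Qed.
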